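(* Let $T=\mathrm{diag}(t_1,t_2,t_3)$ with $|t_1|=|t_2|=s>0$ and $s_3:=|t_3|>0$, and put $u=s_3/s$. Then the condition $2\pi N_T|\det T|=1$ holds if and only if \[ s_3=\begin{cases}\left[1+\dfrac{\arctan\big(\sqrt{u^{-2}-1}\big)}{u^2\sqrt{u^{-2}-1}}\right]^{-1}, & u<1,\\[2ex] \tfrac12, & u=1,\\[1ex] \left[1-\dfrac{\sqrt{1-u^{-2}}}{2(u^2-1)}\ln\dfrac{\big|1-\sqrt{1-u^{-2}}\big|}{1+\sqrt{1-u^{-2}}}\right]^{-1}, & u>1.\end{cases} \]
   Context: $N_T$ is defined by $N_T^{-1}=\int_{S^2}(\boldsymbol n^\intercal T^{-2}\boldsymbol n)^{-2}\,\mathrm{d}^2\boldsymbol n$, where $S^2$ is the unit sphere in $\mathbb{R}^3$ with its standard surface measure. *)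

(* Defs.v *)
From Stdlib Require Import Reals ClassicalEpsilon.
Open Scope R_scope.

(* Value of the Riemann integral of f over [a,b] (meaningful when f is
   Riemann integrable, e.g. continuous; otherwise an unspecified real). *)
Definition RInt (f : R -> R) (a b : R) : R :=
  epsilon (inhabits 0)
    (fun I => exists pr : Riemann_integrable f a b, RiemannInt pr = I).

(* Integral over the unit sphere S^2 with its standard surface measure,
   via spherical coordinates n = (sin th cos ph, sin th sin ph, cos th),
   dA = sin th dth dph, th in [0,pi], ph in [0,2pi]. *)
Definition sphere_integral (F : R -> R -> R -> R) : R :=
  RInt (fun ph =>
          RInt (fun th => F (sin th * cos ph) (sin th * sin ph) (cos th) * sin th)
               0 PI)
       0 (2 * PI).

Definition quadTm2 (t1 t2 t3 x y z : R) : R :=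
  x ^ 2 / t1 ^ 2 + y ^ 2 / t2 ^ 2 + z ^ 2 / t3 ^ 2.

Definition N_T (t1 t2 t3 : R) : R :=
  / sphere_integral (fun x y z => / (quadTm2 t1 t2 t3 x y z) ^ 2).

Definition s3_formula (u : R) : R :=
  if Rlt_dec u 1 then
    / (1 + atan (sqrt (/ u ^ 2 - 1)) / (u ^ 2 * sqrt (/ u ^ 2 - 1)))
  else if Req_EM_T u 1 then 1 / 2
  else
    / (1 - sqrt (1 - / u ^ 2) / (2 * (u ^ 2 - 1))
           * ln (Rabs (1 - sqrt (1 - / u ^ 2)) / (1 + sqrt (1 - / u ^ 2)))).

(* Main.v *)
Require Import Defs.
From Stdlib Require Import Reals ClassicalEpsilon Lra Psatz FunctionalExtensionality.
From Coquelicot Require Import Coquelicot.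
Open Scope R_scope.

Lemma RInt_of (f : R -> R) a b v : a <= b -> is_RInt f a b v -> Defs.RInt f a b = v.
Proof.
intros hab H.
assert (pr := ex_RInt_Reals_0 _ _ _ (ex_intro _ v H)).
unfold Defs.RInt.
assert (E : exists I, exists pr : Riemann_integrable f a b, RiemannInt pr = I) by (exists (RiemannInt pr); exists pr; reflexivity).
destruct (epsilon_spec (inhabits 0) _ E) as [pr' Hp].
rewrite <- Hp, <- RInt_Reals. now apply is_RInt_unique.
Qed.

Lemma pos1 a c : -1 < a -> -1 <= c <= 1 -> 0 < 1 + a * c^2.
Proof. intros ha hc. simpl. rewrite Rmult_1_r. assert (0 <= c*c) by nra. assert (c*c <= 1) by nra. destruct (Rle_dec 0 a). nra. nra. Qed.

Lemma derive_eq f x l l' : is_derive f x l -> l = l' -> is_derive (K:=R_AbsRing) (V:=R_NormedModule) f x l'.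
Proof. intros; subst; auto. Qed.

Lemma key (a : R) (H : R -> R) (ha : -1 < a)
  (hH : forall z, -1 <= z <= 1 -> is_derive H z (/(1+a*z^2))) :
  is_RInt (fun th => sin th / (1 + a*cos th^2)^2) 0 PI (/(1+a) + (H 1 - H (-1))/2).
Proof.
set (G := fun z => z/(2*(1+a*z^2)) + H z/2).
assert (hG : forall z, -1 <= z <= 1 -> is_derive G z (/(1+a*z^2)^2)).
{ intros z hz. pose proof (pos1 a z ha hz). unfold G.
  eapply derive_eq. apply @is_derive_plus.
  - auto_derive. lra. reflexivity.
  - eapply derive_eq. eapply is_derive_ext; [|apply (is_derive_scal H z (/2)); exact (hH z hz)].
    intros t; simpl. lra. reflexivity.
  - simpl. unfold plus, mult; simpl. field. lra. }
assert (E: /(1+a) + (H 1 - H (-1))/2 = minus ((fun th => - G (cos th)) PI) ((fun th => - G (cos th)) 0)).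
{ simpl. rewrite cos_PI, cos_0. unfold G, minus, plus, opp; simpl.
  replace (1 + a * (-1)^2) with (1+a) by ring. replace (1 + a * 1^2) with (1+a) by ring. field. lra. }
rewrite E. apply (is_RInt_derive (V:=R_CompleteNormedModule) (fun th => - G (cos th))).
- intros x hx. pose proof (COS_bound x) as hc.
  pose proof (pos1 a (cos x) ha ltac:(lra)).
  eapply derive_eq. apply @is_derive_opp. apply (is_derive_comp G cos).
  apply hG; lra. apply is_derive_cos.
  simpl. unfold opp, scal, mult; simpl. unfold mult; simpl. field. lra.
- intros x hx. pose proof (COS_bound x) as hc.
  pose proof (pos1 a (cos x) ha ltac:(lra)).
  apply (ex_derive_continuous (K:=R_AbsRing) (V:=R_NormedModule) (fun th => sin th / (1 + a * cos th ^ 2) ^ 2)). auto_derive. simpl in H0. rewrite !Rmult_1_r in *. apply Rgt_not_eq. apply Rmult_lt_0_compat; lra.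
Qed.

Definition Hf (a z : R) : R :=
  if Rlt_dec 0 a then atan (sqrt a * z) / sqrt a
  else if Req_EM_T a 0 then z
  else (ln (1 + sqrt (-a) * z) - ln (1 - sqrt (-a) * z)) / (2 * sqrt (-a)).

Definition Kval (a : R) : R := /(1+a) + (Hf a 1 - Hf a (-1))/2.

Lemma Kval_int a : -1 < a ->
  is_RInt (fun th => sin th / (1 + a*cos th^2)^2) 0 PI (Kval a).
Proof.
intros ha. apply key; auto. intros z hz. unfold Hf.
destruct (Rlt_dec 0 a) as [h1|h1].
- pose proof (sqrt_lt_R0 a h1). pose proof (sqrt_sqrt a (Rlt_le _ _ h1)).
  pose proof (pos1 a z ha hz).
  auto_derive. exact I.
  replace (sqrt a * z * (sqrt a * z * 1)) with (a*z^2) by nra.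
  field. repeat split; lra.
- destruct (Req_EM_T a 0) as [h2|h2].
  + subst a. auto_derive. exact I. rewrite Rmult_0_l, Rplus_0_r, Rinv_1; reflexivity.
  + assert (ha' : 0 < -a) by lra.
    pose proof (sqrt_lt_R0 _ ha'). pose proof (sqrt_sqrt (-a) (Rlt_le _ _ ha')).
    assert (hb : sqrt (-a) < 1).
    { rewrite <- sqrt_1. apply sqrt_lt_1; lra. }
    assert (0 < 1 + sqrt (-a) * z) by nra.
    assert (0 < 1 - sqrt (-a) * z) by nra.
    auto_derive. repeat split; lra.
    set (b := sqrt (-a)) in *.
    replace (a*z^2) with (-(b*b)*z^2) by (rewrite H0; ring).
    field. repeat split; try lra. intro hh.
    assert (hh' : (1 + b*z)*(1-b*z) = 0) by (rewrite <- hh; ring). nra.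
Qed.

Lemma formula_K u : 0 < u -> s3_formula u * Kval (/u^2 - 1) = u^2.
Proof.
intros hu. assert (hu2 : 0 < u^2) by (simpl; nra).
assert (hinv : /(1 + (/u^2 - 1)) = u^2) by (replace (1 + (/u^2-1)) with (/u^2) by ring; apply Rinv_inv).
unfold s3_formula, Kval. rewrite hinv.
destruct (Rlt_dec u 1) as [h1|h1].
- assert (ha : 0 < /u^2 - 1).
  { assert (u^2 < 1) by (simpl; nra). assert (1 < /u^2).
    { rewrite <- Rinv_1. apply Rinv_lt_contravar; lra. } lra. }
  unfold Hf. destruct (Rlt_dec 0 (/u^2-1)) as [_|c]; [|lra].
  set (a := /u^2 - 1) in *.
  pose proof (sqrt_lt_R0 a ha).
  replace (sqrt a * -1) with (- sqrt a) by ring. rewrite atan_opp, Rmult_1_r.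
  assert (0 < atan (sqrt a)) by (rewrite <- atan_0; apply atan_increasing; lra).
  field. repeat split; try lra.
  assert (0 < u^2 * sqrt a) by (apply Rmult_lt_0_compat; lra). lra.
- destruct (Req_EM_T u 1) as [h2|h2].
  + subst u. unfold Hf. replace (/1^2 - 1) with 0 by (simpl; field).
    destruct (Rlt_dec 0 0); [lra|]. destruct (Req_EM_T 0 0); [|lra]. simpl. field.
  + assert (hgt : 1 < u) by lra.
    assert (ha : /u^2 - 1 < 0).
    { assert (1 < u^2) by (simpl; nra). assert (/u^2 < 1).
      { rewrite <- Rinv_1. apply Rinv_lt_contravar; lra. } lra. }
    unfold Hf. destruct (Rlt_dec 0 (/u^2-1)) as [c|_]; [lra|].
    destruct (Req_EM_T (/u^2-1) 0) as [c|_]; [lra|].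
    rewrite Ropp_minus_distr.
    assert (hpos : 0 < 1 - /u^2) by lra.
    pose proof (sqrt_lt_R0 _ hpos). pose proof (sqrt_sqrt _ (Rlt_le _ _ hpos)).
    assert (hb : sqrt (1 - /u^2) < 1).
    { assert (0 < /u^2) by (apply Rinv_0_lt_compat; lra). apply (Rlt_le_trans _ (sqrt 1)); [apply sqrt_lt_1; lra | rewrite sqrt_1; lra]. }
    set (b := sqrt (1 - /u^2)) in *.
    replace (b * -1) with (-b) by ring. rewrite !Rmult_1_r.
    replace (1 + - b) with (1 - b) by ring. replace (1 - - b) with (1 + b) by ring.
    rewrite Rabs_pos_eq by lra. rewrite ln_div by lra.
    assert (hL : ln (1 - b) < ln (1 + b)) by (apply ln_increasing; lra).
    set (L := ln (1 + b) - ln (1 - b)).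
    replace (ln (1 - b) - ln (1 + b)) with (-L) by (unfold L; ring).
    assert (hu21 : u^2 - 1 = u^2 * (b*b)).
    { rewrite H0. field. lra. }
    rewrite hu21.
    assert (0 < b*L/(2*(u^2*(b*b)))).
    { apply Rdiv_lt_0_compat. unfold L; nra. nra. }
    field. repeat split; try lra.
    assert (0 < u^2 * b) by (apply Rmult_lt_0_compat; lra). unfold L in *. lra.
Qed.

Lemma alg (s s3 K F : R) : 0 < s -> 0 < s3 -> F * K = (s3/s)^2 ->
  (2 * PI * / ((2*PI - 0) * (s^4 * K)) * (s*s*s3) = 1 <-> s3 = F).
Proof.
intros hs hs3 hF. pose proof PI_RGT_0.
assert (hK : K <> 0).
{ intro hk. rewrite hk, Rmult_0_r in hF. assert (0 < (s3/s)^2).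
  { apply pow_lt. apply Rdiv_lt_0_compat; lra. } lra. }
assert (hF' : F = (s3/s)^2 / K) by (rewrite <- hF; field; exact hK).
assert (E : 2 * PI * / ((2*PI - 0) * (s^4 * K)) * (s*s*s3) = s3 / (s^2 * K)) by (field; lra).
rewrite E, hF'. split; intro h.
- assert (e : s3 = s3/(s^2*K) * (s^2*K)) by (field; lra).
  rewrite h, Rmult_1_l in e.
  assert (eK : K = s3/s^2) by (rewrite e; field; lra).
  rewrite eK. field. lra.
- assert (h' : s3 * K = (s3/s)^2) by (rewrite h at 1; field; split; [lra|exact hK]).
  assert (eK : K = s3/s^2).
  { apply (Rmult_eq_reg_l s3); [rewrite h'; field; lra | lra]. }
  rewrite eK. field. lra.
Qed.

Theorem mainTheorem4 (t1 t2 t3 s : R) :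
  0 < s -> Rabs t1 = s -> Rabs t2 = s -> 0 < Rabs t3 ->
  (2 * PI * N_T t1 t2 t3 * Rabs (t1 * t2 * t3) = 1 <->
   Rabs t3 = s3_formula (Rabs t3 / s)).
Proof.
intros hs h1 h2 h3.
set (s3 := Rabs t3) in *.
set (u := s3 / s).
assert (hu : 0 < u) by (apply Rdiv_lt_0_compat; lra).
set (a := /u^2 - 1).
assert (ha : -1 < a).
{ assert (0 < /u^2) by (apply Rinv_0_lt_compat; apply pow_lt; lra). unfold a; lra. }
assert (e1 : t1^2 = s^2) by (rewrite <- pow2_abs, h1; reflexivity).
assert (e2 : t2^2 = s^2) by (rewrite <- pow2_abs, h2; reflexivity).
assert (e3 : t3^2 = s3^2) by (rewrite <- pow2_abs; reflexivity).
assert (Inner : forall ph,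
  Defs.RInt (fun th => / quadTm2 t1 t2 t3 (sin th * cos ph) (sin th * sin ph) (cos th) ^ 2 * sin th) 0 PI
  = s^4 * Kval a).
{ intros ph. apply RInt_of. pose proof PI_RGT_0; lra.
  eapply is_RInt_ext; [| apply (is_RInt_scal _ _ _ (s^4) _ (Kval_int a ha))].
  intros th _. unfold scal; simpl. unfold mult; simpl.
  assert (hs2 : sin th ^2 = 1 - cos th^2) by (pose proof (sin2_cos2 th); unfold Rsqr in *; simpl; lra).
  assert (hp2 : sin ph ^2 = 1 - cos ph^2) by (pose proof (sin2_cos2 ph); unfold Rsqr in *; simpl; lra).
  pose proof (COS_bound th).
  pose proof (pos1 a (cos th) ha ltac:(lra)).
  assert (q : quadTm2 t1 t2 t3 (sin th * cos ph) (sin th * sin ph) (cos th) = (1 + a*cos th^2)/s^2).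
  { unfold quadTm2. rewrite e1, e2, e3, !Rpow_mult_distr, hs2, hp2. unfold a, u. field. lra. }
  rewrite q. field. lra. }
unfold N_T, sphere_integral.
assert (Outer : (fun ph => Defs.RInt (fun th => / quadTm2 t1 t2 t3 (sin th * cos ph) (sin th * sin ph) (cos th) ^ 2 * sin th) 0 PI) = fun _ => s^4 * Kval a).
{ apply functional_extensionality. exact Inner. }
rewrite Outer.
rewrite (RInt_of (fun _ => s^4 * Kval a) 0 (2*PI) _ ltac:(pose proof PI_RGT_0; lra) (is_RInt_const _ _ _)).
unfold scal; simpl. unfold mult; simpl.
rewrite !Rabs_mult, h1, h2.
apply alg; auto. apply formula_K. exact hu.
Qed.
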